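(* Every finitely generated centrally nilpotent brace is supersoluble.
   Context: A brace (skew left brace) is a set $B$ with two binary operations $+$ and $\cdot$ such that $(B,+)$ and $(B,\cdot)$ are groups and $a(b+c)=ab-a+ac$ for all $a,b,c\in B$. A subbrace is a subset that is a subgroup of both groups; $B$ is finitely generated if it is the smallest subbrace containing some finite subset. $\lambda_a(b)=-a+ab$ defines a homomorphism $\lambda\colon(B,\cdot)\to\operatorname{Aut}(B,+)$. An ideal is a subbrace normal in both groups and invariant under all $\lambda_b$; quotients by ideals are braces. $\operatorname{Soc}(B)=\operatorname{Ker}\lambda\cap Z(B,+)$, $\zeta(B)=\operatorname{Soc}(B)\cap Z(B,\cdot)$; $\zeta_0(B)=\{0\}$, $\zeta_{k+1}(B)/\zeta_k(B)=\zeta(B/\zeta_k(B))$; $B$ is centrally nilpotent if $B=\zeta_m(B)$ for some $m$. $B$ is supersoluble if there is a finite chain of ideals $\{0\}=I_0\le\dots\le I_n=B$ such that for each $i$, either $(I_{i+1}/I_i,+)$ is infinite cyclic and $I_{i+1}/I_i\le\operatorname{Soc}(B/I_i)$, or $I_{i+1}/I_i$ has prime order. *)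

(* Defs.v *)
From Stdlib Require Import ZArith List Znumtheory.
Import ListNotations.

Record brace := Brace {
  carrier :> Type;
  badd : carrier -> carrier -> carrier;
  bzero : carrier;
  bneg : carrier -> carrier;
  bmul : carrier -> carrier -> carrier;
  bone : carrier;
  binv : carrier -> carrier;
  badd_assoc : forall a b c, badd a (badd b c) = badd (badd a b) c;
  badd_0l : forall a, badd bzero a = a;
  badd_0r : forall a, badd a bzero = a;
  badd_Nl : forall a, badd (bneg a) a = bzero;
  badd_Nr : forall a, badd a (bneg a) = bzero;
  bmul_assoc : forall a b c, bmul a (bmul b c) = bmul (bmul a b) c;
  bmul_1l : forall a, bmul bone a = a;
  bmul_1r : forall a, bmul a bone = a;
  bmul_Vl : forall a, bmul (binv a) a = bone;
  bmul_Vr : forall a, bmul a (binv a) = bone;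
  brace_law : forall a b c,
    bmul a (badd b c) = badd (bmul a b) (badd (bneg a) (bmul a c))
}.

Arguments badd {b} _ _ : rename. Arguments bzero {b} : rename. Arguments bneg {b} _ : rename. Arguments bmul {b} _ _ : rename. Arguments bone {b} : rename. Arguments binv {b} _ : rename.

Section BraceDefs.
Variable B : brace.

Definition bset := B -> Prop.

Definition lam (a b : B) : B := badd (bneg a) (bmul a b).

(* a and b are equal in the quotient by I: a + I = b + I, i.e. -b + a ∈ I *)
Definition cong (I : bset) (a b : B) : Prop := I (badd (bneg b) a).

Definition add_subgroup (S : bset) : Prop :=
  S bzero /\ (forall a b, S a -> S b -> S (badd a b)) /\ (forall a, S a -> S (bneg a)).

Definition mul_subgroup (S : bset) : Prop :=
  S bone /\ (forall a b, S a -> S b -> S (bmul a b)) /\ (forall a, S a -> S (binv a)).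

Definition subbrace (S : bset) : Prop := add_subgroup S /\ mul_subgroup S.

Definition ideal (I : bset) : Prop :=
  subbrace I /\
  (forall a x, I x -> I (badd (badd a x) (bneg a))) /\
  (forall a x, I x -> I (bmul (bmul a x) (binv a))) /\
  (forall b x, I x -> I (lam b x)).

Definition fin_gen : Prop :=
  exists S : list B, forall T : bset, subbrace T ->
    (forall s, In s S -> T s) -> forall x, T x.

(* preimage in B of zeta(B/I) = (Ker lambda ∩ Z(B,+) ∩ Z(B,.)) computed in B/I *)
Definition zeta_mod (I : bset) : bset := fun x =>
  (forall y, cong I (lam x y) y) /\
  (forall y, cong I (badd x y) (badd y x)) /\
  (forall y, cong I (bmul x y) (bmul y x)).

Fixpoint zeta (k : nat) : bset :=
  match k with
  | O => fun x => x = bzero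
  | S k' => zeta_mod (zeta k')
  end.

Definition centrally_nilpotent : Prop := exists m : nat, forall x : B, zeta m x.

Fixpoint nmul (n : nat) (g : B) : B :=
  match n with O => bzero | S n' => badd g (nmul n' g) end.

Definition zmul (z : Z) (g : B) : B :=
  match z with
  | Z0 => bzero
  | Zpos p => nmul (Pos.to_nat p) g
  | Zneg p => bneg (nmul (Pos.to_nat p) g)
  end.

(* (J/I,+) is infinite cyclic (I ⊆ J): generated by the class of some g ∈ J
   whose class has infinite order *)
Definition quot_inf_cyclic (J I : bset) : Prop :=
  exists g, J g /\
    (forall x, J x -> exists z : Z, cong I x (zmul z g)) /\
    (forall z : Z, I (zmul z g) -> z = 0%Z).

(* J/I ≤ Soc(B/I) *)
Definition quot_in_soc (J I : bset) : Prop :=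
  forall x, J x ->
    (forall y, cong I (lam x y) y) /\ (forall y, cong I (badd x y) (badd y x)).

(* J/I has prime order p: J has exactly p classes modulo I *)
Definition quot_prime_order (J I : bset) : Prop :=
  exists (p : nat) (l : list B),
    prime (Z.of_nat p) /\ length l = p /\
    (forall a, In a l -> J a) /\
    (forall j k, (j < p)%nat -> (k < p)%nat ->
       cong I (nth j l bzero) (nth k l bzero) -> j = k) /\
    (forall x, J x -> exists a, In a l /\ cong I x a).

Definition supersoluble : Prop :=
  exists (n : nat) (I : nat -> bset),
    (forall x, I O x <-> x = bzero) /\
    (forall x, I n x) /\
    (forall i, (i <= n)%nat -> ideal (I i)) /\
    (forall i, (i < n)%nat -> forall x, I i x -> I (S i) x) /\
    (forall i, (i < n)%nat ->
       (quot_inf_cyclic (I (S i)) (I i) /\ quot_in_soc (I (S i)) (I i))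
       \/ quot_prime_order (I (S i)) (I i)).

End BraceDefs.

(* Main.v *)
Require Import Defs.
From Stdlib Require Import ZArith List Znumtheory Lia Arith.
From Stdlib Require Import Classical FunctionalExtensionality PropExtensionality.
Import ListNotations.
Open Scope nat_scope.

Section Basics.
Context {B : brace}.
Local Notation "a + b" := (@badd B a b).
Local Notation "- a" := (@bneg B a).
Local Notation "a * b" := (@bmul B a b).
Local Notation "0" := (@bzero B).

Lemma add_assoc' (a b c : B) : (a + b) + c = a + (b + c).
Proof. now rewrite badd_assoc. Qed.

Lemma addKl (a b : B) : - a + (a + b) = b.
Proof. now rewrite badd_assoc, badd_Nl, badd_0l. Qed.
Lemma addNKl (a b : B) : a + (- a + b) = b.
Proof. now rewrite badd_assoc, badd_Nr, badd_0l. Qed.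
Lemma add_cancel_l (a b c : B) : a + b = a + c -> b = c.
Proof. intros H. rewrite <- (addKl a b), <- (addKl a c). now rewrite H. Qed.
Lemma add_cancel_r (a b c : B) : b + a = c + a -> b = c.
Proof. intros H. rewrite <- (badd_0r _ b), <- (badd_0r _ c), <- (badd_Nr _ a), !badd_assoc.
  now rewrite H. Qed.
Lemma neg_unique (a b : B) : a + b = 0 -> b = - a.
Proof. intros H. apply (add_cancel_l a). now rewrite H, badd_Nr. Qed.
Lemma negK (a : B) : - - a = a.
Proof. symmetry. apply neg_unique. apply badd_Nl. Qed.
Lemma neg_add (a b : B) : - (a + b) = - b + - a.
Proof. symmetry. apply neg_unique. rewrite add_assoc'. rewrite (badd_assoc _ b).
  now rewrite badd_Nr, badd_0l, badd_Nr. Qed.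
Lemma neg0 : - (0 : B) = 0.
Proof. symmetry. apply neg_unique. apply badd_0l. Qed.
Lemma addKr (a b : B) : (b + a) + - a = b.
Proof. now rewrite add_assoc', badd_Nr, badd_0r. Qed.
Lemma addNKr (a b : B) : (b + - a) + a = b.
Proof. now rewrite add_assoc', badd_Nl, badd_0r. Qed.

Lemma mulKl (a b : B) : binv a * (a * b) = b.
Proof. now rewrite bmul_assoc, bmul_Vl, bmul_1l. Qed.
Lemma mulNKl (a b : B) : a * (binv a * b) = b.
Proof. now rewrite bmul_assoc, bmul_Vr, bmul_1l. Qed.
Lemma mul_cancel_l (a b c : B) : a * b = a * c -> b = c.
Proof. intros H. rewrite <- (mulKl a b), <- (mulKl a c). now rewrite H. Qed.
Lemma inv_unique (a b : B) : a * b = bone -> b = binv a.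
Proof. intros H. apply (mul_cancel_l a). now rewrite H, bmul_Vr. Qed.
Lemma invK (a : B) : binv (binv a) = a.
Proof. symmetry. apply inv_unique. apply bmul_Vl. Qed.
Lemma inv_mul (a b : B) : binv (a * b) = binv b * binv a.
Proof. symmetry. apply inv_unique. rewrite <- bmul_assoc. rewrite (bmul_assoc _ b).
  now rewrite bmul_Vr, bmul_1l, bmul_Vr. Qed.

Lemma mul_0r (a : B) : a * 0 = a.
Proof.
  pose proof (brace_law B a 0 0) as H. rewrite badd_0l in H.
  assert (H2 : (a * 0) + 0 = (a * 0) + (- a + a * 0)) by now rewrite badd_0r.
  apply add_cancel_l in H2.
  rewrite <- (addNKl a (a * 0)). rewrite <- H2. apply badd_0r.
Qed.
Lemma one_zero : (bone : B) = 0.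
Proof. rewrite <- (mul_0r bone). now rewrite bmul_1l. Qed.
Lemma mul_0l (a : B) : 0 * a = a.
Proof. rewrite <- one_zero. apply bmul_1l. Qed.
Lemma inv0 : binv (0:B) = 0.
Proof. rewrite <- one_zero. symmetry. apply inv_unique. apply bmul_1l. Qed.
Lemma mul_inv_r (a : B) : a * binv a = 0.
Proof. rewrite bmul_Vr. apply one_zero. Qed.
Lemma mul_inv_l (a : B) : binv a * a = 0.
Proof. rewrite bmul_Vl. apply one_zero. Qed.

Definition lamB := @lam B.
Lemma mul_lam (a b : B) : a * b = a + lam B a b.
Proof. unfold lam. now rewrite addNKl. Qed.
Lemma lam_add (a b c : B) : lam B a (b + c) = lam B a b + lam B a c.
Proof. unfold lam. rewrite brace_law. now rewrite !add_assoc'. Qed.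
Lemma lam_0 (a : B) : lam B a 0 = 0.
Proof. unfold lam. rewrite mul_0r. apply badd_Nl. Qed.
Lemma lam_neg (a b : B) : lam B a (- b) = - lam B a b.
Proof. apply neg_unique. rewrite <- lam_add, badd_Nr. apply lam_0. Qed.
Lemma lam_one (b : B) : lam B 0 b = b.
Proof. unfold lam. now rewrite neg0, badd_0l, mul_0l. Qed.
Lemma lam_mul (a b c : B) : lam B (a * b) c = lam B a (lam B b c).
Proof.
  unfold lam at 3. rewrite lam_add, lam_neg. unfold lam. rewrite neg_add, negK.
  rewrite bmul_assoc. rewrite add_assoc'. f_equal. now rewrite addNKl.
Qed.
Lemma lam_invK (a b : B) : lam B (binv a) (lam B a b) = b.
Proof. now rewrite <- lam_mul, mul_inv_l, lam_one. Qed.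
Lemma lam_Kinv (a b : B) : lam B a (lam B (binv a) b) = b.
Proof. now rewrite <- lam_mul, mul_inv_r, lam_one. Qed.
Lemma lam_binv (a : B) : lam B a (binv a) = - a.
Proof. unfold lam. now rewrite mul_inv_r, badd_0r. Qed.
Lemma binv_lam (a : B) : binv a = lam B (binv a) (- a).
Proof. rewrite <- (lam_binv a). now rewrite lam_invK. Qed.
Lemma add_as_mul (a b : B) : a + b = a * lam B (binv a) b.
Proof. now rewrite mul_lam, lam_Kinv. Qed.
Lemma lam_sub (a b c : B) : lam B a (b + - c) = lam B a b + - lam B a c.
Proof. now rewrite lam_add, lam_neg. Qed.

End Basics.

Ltac asimpl := repeat (first [rewrite neg_add | rewrite negK | rewrite neg0 | rewrite add_assoc'
  | rewrite badd_0l | rewrite badd_0r | rewrite addKl | rewrite addNKl | rewrite badd_Nl | rewrite badd_Nr]).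

Section Ideals.
Context {B : brace}.
Local Notation "a + b" := (@badd B a b).
Local Notation "- a" := (@bneg B a).
Local Notation "a * b" := (@bmul B a b).
Local Notation "0" := (@bzero B).
Local Notation lam := (lam B).

Definition opT (a b : B) : B := - b + lam a b.
Definition opT' (a b : B) : B := - b + lam (binv a) b.
Definition opC (a b : B) : B := - (b + a) + (a + b).

Lemma opT_eq (a b : B) : lam a b = b + opT a b.
Proof. unfold opT. now rewrite addNKl. Qed.
Lemma opT'_eq (a b : B) : lam (binv a) b = b + opT' a b.
Proof. unfold opT'. now rewrite addNKl. Qed.
Lemma opC_swap (a b : B) : opC a b = - opC b a.
Proof. unfold opC. now asimpl. Qed.

Section Sub.
Variable I : bset B.
Hypothesis HI : add_subgroup B I.
Lemma I0 : I 0. Proof. apply HI. Qed.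
Lemma Iadd a b : I a -> I b -> I (a + b). Proof. apply HI. Qed.
Lemma Ineg a : I a -> I (- a). Proof. apply HI. Qed.
Lemma Ineg_iff a : I (- a) <-> I a.
Proof. split; intro H; [rewrite <- negK|]; now apply Ineg. Qed.
Lemma Isub_l a b : I a -> I (a + b) -> I b.
Proof. intros Ha Hab. rewrite <- (addKl a b). apply Iadd; auto. now apply Ineg. Qed.
Lemma Isub_r a b : I b -> I (a + b) -> I a.
Proof. intros Hb Hab. rewrite <- (addKr b a). apply Iadd; auto. now apply Ineg. Qed.

Definition ZP (x : B) : Prop :=
  (forall y, I (opT x y)) /\ (forall y, I (opC x y)) /\ (forall y, I (opT y x)).

Lemma mulcomm_id (x y : B) :
  - (y * x) + x * y = - opT y x + (opC x y + opT x y).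
Proof. rewrite !mul_lam. unfold opT, opC. now asimpl. Qed.

Lemma zeta_ZP (x : B) : zeta_mod B I x <-> ZP x.
Proof.
  unfold zeta_mod, ZP, cong. split.
  - intros [H1 [H2 H3]]. split; [exact H1|]. split; [exact H2|].
    intros y. specialize (H3 y). rewrite mulcomm_id in H3.
    apply Isub_r in H3. now apply Ineg_iff. apply Iadd. exact (H2 y). exact (H1 y).
  - intros [H1 [H2 H3]]. split; [exact H1|]. split; [exact H2|].
    intros y. rewrite mulcomm_id. apply Iadd. apply Ineg, H3. apply Iadd. exact (H2 y). exact (H1 y).
Qed.

Lemma ZP_T' (x y : B) : ZP x -> I (opT' x y).
Proof.
  intros [H1 _]. specialize (H1 (lam (binv x) y)). unfold opT in H1. rewrite lam_Kinv in H1.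
  unfold opT'. apply Ineg in H1. now rewrite neg_add, negK in H1.
Qed.
Lemma ZP_N (x y : B) : ZP x -> I (- x + lam y x).
Proof. intros [_ [_ H]]. apply H. Qed.

End Sub.

Section Ideal.
Variable I : bset B.
Hypothesis HI : ideal B I.
Lemma ideal_sub : add_subgroup B I. Proof. apply HI. Qed.
Lemma ideal_mul a b : I a -> I b -> I (a * b). Proof. intros. apply HI; auto. Qed.
Lemma ideal_inv a : I a -> I (binv a). Proof. intros. apply HI; auto. Qed.
Lemma ideal_nadd a x : I x -> I (a + x + - a). Proof. intros. apply HI; auto. Qed.
Lemma ideal_nmul a x : I x -> I (a * x * binv a). Proof. intros. apply HI; auto. Qed.
Lemma ideal_lam a x : I x -> I (lam a x). Proof. intros. apply HI; auto. Qed.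
Hint Resolve ideal_sub : core.

Lemma ideal_T_l (i y : B) : I i -> I (opT i y).
Proof.
  intros Hi. set (j := binv y * i * y).
  assert (Hj : I j). { unfold j. rewrite <- (invK y) at 2. now apply ideal_nmul. }
  assert (E : i * y = y * j). { unfold j. now rewrite !bmul_assoc, bmul_Vr, bmul_1l. }
  unfold opT, lam. rewrite E, mul_lam.
  replace (- y + (- i + (y + lam y j))) with ((- y + - i + - - y) + lam y j) by (now asimpl).
  apply Iadd; auto. apply ideal_nadd. now apply Ineg.
  now apply ideal_lam.
Qed.
Lemma ideal_C_l (i y : B) : I i -> I (opC i y).
Proof.
  intros Hi. unfold opC.
  replace (- (y + i) + (i + y)) with (- i + ((- y + i) + - - y)) by (now asimpl).
  apply Iadd; auto. now apply Ineg. apply ideal_nadd; auto.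
Qed.
Lemma ideal_T_r (i y : B) : I i -> I (opT y i).
Proof. intros Hi. unfold opT. apply Iadd; auto. now apply Ineg. now apply ideal_lam. Qed.
Lemma ideal_ZP (i : B) : I i -> ZP I i.
Proof. intros Hi. split; [|split]; intros y. now apply ideal_T_l. now apply ideal_C_l. now apply ideal_T_r. Qed.

Lemma lam_shift (a i y : B) : I i -> I (- lam a y + lam (a + i) y).
Proof.
  intros Hi. rewrite (add_as_mul a i), lam_mul. set (j := lam (binv a) i).
  assert (Hj : I j) by (now apply ideal_lam).
  rewrite (opT_eq j y), lam_add. asimpl. apply ideal_lam. now apply ideal_T_l.
Qed.
Lemma lam_shift' (a i y : B) : I i -> I (- lam a y + lam (i + a) y).
Proof.
  intros Hi. replace (i + a) with (a + ((- a + i) + - - a)) by (now asimpl).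
  apply lam_shift. apply ideal_nadd. auto.
Qed.

Lemma ZP_add (x1 x2 : B) : ZP I x1 -> ZP I x2 -> ZP I (x1 + x2).
Proof.
  intros H1 H2. pose proof H1 as [A1 [B1 C1]]. pose proof H2 as [A2 [B2 C2]].
  split; [|split]; intros y.
  - rewrite (add_as_mul x1 x2). set (w := lam (binv x1) x2).
    assert (Ew : w = x2 + opT' x1 x2) by (apply opT'_eq).
    assert (Hr : I (- y + lam w y)).
    { replace (- y + lam w y) with (opT x2 y + (- lam x2 y + lam w y)) by (unfold opT; now asimpl).
      apply Iadd; auto. rewrite Ew. apply lam_shift. now apply ZP_T'. }
    unfold opT at 1. rewrite lam_mul. rewrite (opT_eq w y) at 1.
    fold (opT w y). rewrite lam_add. rewrite <- add_assoc'. apply Iadd; [auto | exact (A1 y) | apply ideal_lam; exact Hr].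
  - unfold opC.
    replace (- (y + (x1 + x2)) + ((x1 + x2) + y))
      with ((- x2 + opC x1 y + - - x2) + opC x2 y) by (unfold opC; now asimpl).
    apply Iadd; auto. apply ideal_nadd; auto.
  - unfold opT. rewrite lam_add.
    replace (- (x1 + x2) + (lam y x1 + lam y x2))
      with ((- x2 + opT y x1 + - - x2) + opT y x2) by (unfold opT; now asimpl).
    apply Iadd; auto. apply ideal_nadd; auto.
Qed.

Lemma ZP_neg (x : B) : ZP I x -> ZP I (- x).
Proof.
  intros H. pose proof H as [A [Bc Cc]].
  assert (Ex : - x = opT' x x + binv x).
  { unfold opT'. rewrite (binv_lam x) at 2. rewrite lam_neg. now asimpl. }
  split; [|split]; intros y.
  - unfold opT. rewrite Ex.
    replace (- y + lam (opT' x x + binv x) y)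
      with (opT' x y + (- lam (binv x) y + lam (opT' x x + binv x) y)) by (unfold opT'; now asimpl).
    apply Iadd; auto. now apply ZP_T'. apply lam_shift'. now apply ZP_T'.
  - unfold opC.
    replace (- (y + - x) + (- x + y)) with (x + - opC x y + - x) by (unfold opC; now asimpl).
    apply ideal_nadd. apply Ineg; auto.
  - unfold opT. rewrite lam_neg.
    replace (- - x + - lam y x) with (x + - opT y x + - x) by (unfold opT; now asimpl).
    apply ideal_nadd. apply Ineg; auto.
Qed.

Lemma ZP_0 : ZP I 0.
Proof. apply ideal_ZP. apply I0; auto. Qed.

Lemma between_ideal (T : bset B) :
  add_subgroup B T -> (forall x, I x -> T x) -> (forall x, T x -> ZP I x) -> ideal B T.
Proof.
  intros HT HIT HTZ.
  assert (Tn : forall b x, T x -> T (b + x + - b)).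
  { intros b x Hx. replace (b + x + - b) with (x + opC x (- b)) by (unfold opC; now asimpl).
    apply Iadd; auto. apply HIT. apply (HTZ x Hx). }
  assert (Tl : forall b x, T x -> T (lam b x)).
  { intros b x Hx. rewrite opT_eq. apply Iadd; auto. apply HIT. apply (HTZ x Hx). }
  split; [split; [exact HT|] |].
  - split; [|split].
    + rewrite one_zero. apply I0; auto.
    + intros a b Ha Hb. rewrite mul_lam. apply Iadd; auto.
    + intros a Ha. rewrite binv_lam. rewrite opT'_eq. apply Iadd; auto. apply Ineg; auto.
      apply HIT. apply ZP_T'; [auto | apply HTZ; auto].
  - split; [exact Tn|]. split; [|exact Tl].
    intros b x Hx.
    replace (b * x * binv b) with ((b + lam b x + - b) + lam b (opT x (binv b))).
    + apply Iadd; auto. apply HIT. apply ideal_lam. apply (HTZ x Hx).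
    + rewrite (mul_lam (b * x) (binv b)), lam_mul, (mul_lam b x).
      rewrite (opT_eq x (binv b)) at 1. rewrite lam_add, lam_binv. now asimpl.
Qed.

Lemma zeta_mod_ideal : ideal B (zeta_mod B I).
Proof.
  apply between_ideal.
  - split; [|split].
    + apply zeta_ZP; auto. apply ZP_0.
    + intros a b Ha Hb. apply zeta_ZP; auto. apply zeta_ZP in Ha; auto. apply zeta_ZP in Hb; auto.
      now apply ZP_add.
    + intros a Ha. apply zeta_ZP; auto. apply zeta_ZP in Ha; auto. now apply ZP_neg.
  - intros x Hx. apply zeta_ZP; auto. now apply ideal_ZP.
  - intros x Hx. apply zeta_ZP; auto.
Qed.

End Ideal.

Lemma zeta_ideal (k : nat) : ideal B (zeta B k).
Proof.
  induction k as [|k IH]; simpl.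
  - split; [split|split; [|split]].
    + split; [reflexivity|]. split.
      * intros a b -> ->. apply badd_0l.
      * intros a ->. apply neg0.
    + split; [apply one_zero|]. split.
      * intros a b -> ->. apply mul_0l.
      * intros a ->. apply inv0.
    + intros a x ->. rewrite badd_0r. apply badd_Nr.
    + intros a x ->. rewrite mul_0r. apply mul_inv_r.
    + intros b x ->. apply lam_0.
  - now apply zeta_mod_ideal.
Qed.

End Ideals.

Section Words.
Context {B : brace}.
Local Notation "a + b" := (@badd B a b).
Local Notation "- a" := (@bneg B a).
Local Notation "a * b" := (@bmul B a b).
Local Notation "0" := (@bzero B).
Local Notation lam := (lam B).

Lemma zeta_sub (l : nat) : add_subgroup B (zeta B l).
Proof. apply ideal_sub, zeta_ideal. Qed.

Definition isop (f : B -> B -> B) : Prop := f = opT \/ f = opT' \/ f = opC.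

Lemma op_zeta0_l f b : isop f -> f 0 b = 0.
Proof.
  intros [->|[->| ->]]; unfold opT, opT', opC.
  - now rewrite lam_one, badd_Nl.
  - now rewrite inv0, lam_one, badd_Nl.
  - now rewrite badd_0l, badd_0r, badd_Nl.
Qed.
Lemma op_zeta0_r f b : isop f -> f b 0 = 0.
Proof.
  intros [->|[->| ->]]; unfold opT, opT', opC.
  - now rewrite lam_0, neg0, badd_0l.
  - now rewrite lam_0, neg0, badd_0l.
  - now rewrite badd_0l, badd_0r, badd_Nl.
Qed.
Lemma op_zetaS f l x b : isop f -> zeta B (S l) x -> zeta B l (f x b) /\ zeta B l (f b x).
Proof.
  intros Hf Hx. simpl in Hx. apply zeta_ZP in Hx; [|apply zeta_sub].
  pose proof Hx as [H1 [H2 H3]].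
  destruct Hf as [->|[->| ->]]; split.
  - apply H1.
  - apply H3.
  - apply ZP_T'; auto. apply zeta_sub.
  - unfold opT'. apply (H3 (binv b)).
  - apply H2.
  - rewrite opC_swap. apply Ineg. apply zeta_sub. apply H2.
Qed.

Inductive Sum (L : list B) : B -> Prop :=
| Sum0 : Sum L 0
| SumC e x : In e L -> Sum L x -> Sum L (e + x).

Lemma Sum_add L x y : Sum L x -> Sum L y -> Sum L (x + y).
Proof.
  intros Hx Hy. induction Hx as [|e x He Hx IH].
  - now rewrite badd_0l.
  - rewrite add_assoc'. now constructor.
Qed.
Lemma Sum_one L e : In e L -> Sum L e.
Proof. intros H. rewrite <- (badd_0r _ e). constructor; auto. constructor. Qed.
Lemma Sum_neg L x : (forall e, In e L -> In (- e) L) -> Sum L x -> Sum L (- x).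
Proof.
  intros HL Hx. induction Hx as [|e x He Hx IH].
  - rewrite neg0. constructor.
  - rewrite neg_add. apply Sum_add; auto. apply Sum_one; auto.
Qed.
Lemma Sum_incl L L' x : incl L L' -> Sum L x -> Sum L' x.
Proof. intros H Hx. induction Hx; constructor; auto. Qed.
Lemma Sum_sub L : (forall e, In e L -> In (- e) L) -> add_subgroup B (Sum L).
Proof. intros H. split; [constructor|split]. apply Sum_add. intros; now apply Sum_neg. Qed.
Lemma Sum_nil x : Sum [] x -> x = 0.
Proof. intros H. inversion H; auto. contradiction. Qed.
Lemma Sum_closed (P : B -> Prop) L : add_subgroup B P -> (forall e, In e L -> P e) ->
  forall x, Sum L x -> P x.
Proof. intros HP HL x Hx. induction Hx. apply HP. apply HP; auto. Qed.

Variable gens : list B.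
Variable m : nat.
Hypothesis Hm : forall x, zeta B m x.

Definition pairops (a b : B) : list B :=
  [opT a b; - opT a b; opT b a; - opT b a; opT' a b; - opT' a b; opT' b a; - opT' b a;
   opC a b; - opC a b; opC b a; - opC b a].
Definition newops (E L : list B) : list B :=
  flat_map (fun a => flat_map (fun b => pairops a b) L) E.

Fixpoint EL (i : nat) : list B * list B :=
  match i with
  | O => ([], [])
  | S i' => let (E, L) := EL i' in
            let E' := match i' with O => gens ++ map bneg gens | _ => newops E L end in
            (E', L ++ E')
  end.
Definition Ex i := fst (EL i).
Definition Le i := snd (EL i).

Lemma Ex_1 : Ex 1 = gens ++ map bneg gens.
Proof. reflexivity. Qed.
Lemma Ex_S i : 1 <= i -> Ex (S i) = newops (Ex i) (Le i).
Proof. intros Hi. unfold Ex, Le. simpl. destruct (EL i) as [E L] eqn:HE. destruct i; [lia|]. reflexivity. Qed.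
Lemma Le_S i : Le (S i) = Le i ++ Ex (S i).
Proof. unfold Ex, Le. simpl. destruct (EL i) as [E L]. reflexivity. Qed.
Lemma Le_spec i b : In b (Le i) <-> exists j, 1 <= j <= i /\ In b (Ex j).
Proof.
  induction i as [|i IH].
  - simpl. split; [intros []|]. intros [j [Hj _]]. lia.
  - rewrite Le_S, in_app_iff, IH. split.
    + intros [[j [Hj Hb]]|Hb]. exists j; split; auto; lia. exists (S i); split; auto; lia.
    + intros [j [Hj Hb]]. destruct (Nat.eq_dec j (S i)) as [->|Hne]. now right.
      left. exists j; split; auto; lia.
Qed.

Lemma Ex_op f i j a b : isop f -> 1 <= i -> 1 <= j -> In a (Ex i) -> In b (Ex j) ->
  In (f a b) (Ex (S (max i j))) /\ In (- f a b) (Ex (S (max i j))).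
Proof.
  intros Hf Hi Hj Ha Hb. rewrite Ex_S by lia. unfold newops.
  destruct (Nat.le_ge_cases j i) as [Hji|Hij].
  - rewrite Nat.max_l by lia.
    assert (Hb' : In b (Le i)) by (apply Le_spec; exists j; split; auto; lia).
    split; apply in_flat_map; exists a; split; auto; apply in_flat_map; exists b; split; auto;
    destruct Hf as [->|[->| ->]]; simpl; tauto.
  - rewrite Nat.max_r by lia.
    assert (Ha' : In a (Le j)) by (apply Le_spec; exists i; split; auto; lia).
    split; apply in_flat_map; exists b; split; auto; apply in_flat_map; exists a; split; auto;
    destruct Hf as [->|[->| ->]]; simpl; tauto.
Qed.

Lemma Ex_neg i a : 1 <= i -> In a (Ex i) -> In (- a) (Ex i).
Proof.
  intros Hi Ha. destruct i as [|i]; [lia|]. destruct i as [|i].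
  - rewrite Ex_1 in *. apply in_app_iff in Ha as [Ha|Ha]; apply in_app_iff.
    + right. now apply in_map.
    + left. apply in_map_iff in Ha as [x [<- Hx]]. now rewrite negK.
  - rewrite Ex_S in * by lia. unfold newops in *.
    apply in_flat_map in Ha as [x [Hx Ha]]. apply in_flat_map in Ha as [y [Hy Ha]].
    apply in_flat_map. exists x; split; auto. apply in_flat_map. exists y; split; auto.
    unfold pairops in *. simpl in Ha |- *.
    repeat (destruct Ha as [<-|Ha]; [rewrite ?negK; tauto|]). contradiction.
Qed.

Lemma Ex_zeta i : 1 <= i -> forall a, In a (Ex i) -> zeta B (m + 1 - i) a.
Proof.
  induction i as [|i IH]; intros Hi a Ha; [lia|].
  destruct i as [|i].
  - replace (m + 1 - 1) with m by lia. apply Hm.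
  - rewrite Ex_S in Ha by lia. unfold newops in Ha.
    apply in_flat_map in Ha as [x [Hx Ha]]. apply in_flat_map in Ha as [y [Hy Ha]].
    specialize (IH ltac:(lia) x Hx).
    assert (Hop : forall f, isop f -> zeta B (m + 1 - S (S i)) (f x y) /\ zeta B (m + 1 - S (S i)) (f y x)).
    { intros f Hf. destruct (m + 1 - S i) as [|l] eqn:E.
      - replace (m + 1 - S (S i)) with O by lia. simpl in IH. subst x.
        rewrite op_zeta0_l, op_zeta0_r by auto. simpl; auto.
      - replace (m + 1 - S (S i)) with l by lia. now apply op_zetaS. }
    assert (Hneg : forall c, zeta B (m + 1 - S (S i)) c -> zeta B (m + 1 - S (S i)) (- c)).
    { intros c Hc. apply Ineg; auto. apply zeta_sub. }
    unfold pairops in Ha. simpl in Ha.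
    assert (T1 := Hop _ (or_introl eq_refl)).
    assert (T2 := Hop _ (or_intror (or_introl eq_refl))).
    assert (T3 := Hop _ (or_intror (or_intror eq_refl))).
    repeat (destruct Ha as [<-|Ha]; [first [apply T1 | apply T2 | apply T3 | apply Hneg; first [apply T1 | apply T2 | apply T3]]|]).
    contradiction.
Qed.

Definition Ge k := flat_map Ex (seq k (m + 1 - k)).
Lemma Ge_spec k a : In a (Ge k) <-> exists i, k <= i <= m /\ In a (Ex i).
Proof.
  unfold Ge. rewrite in_flat_map. split.
  - intros [i [Hi Ha]]. apply in_seq in Hi. exists i. split; auto. lia.
  - intros [i [Hi Ha]]. exists i. split; auto. apply in_seq. lia.
Qed.
Lemma Ge_neg k a : 1 <= k -> In a (Ge k) -> In (- a) (Ge k).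
Proof.
  intros Hk Ha. apply Ge_spec in Ha as [i [Hi Ha]]. apply Ge_spec. exists i. split; auto.
  apply Ex_neg; auto. lia.
Qed.

Definition II k := Sum (Ge k).
Lemma II_sub k : 1 <= k -> add_subgroup B (II k).
Proof. intros Hk. apply Sum_sub. intros; now apply Ge_neg. Qed.
Lemma II_mono k k' : k <= k' -> forall x, II k' x -> II k x.
Proof.
  intros Hk x. apply Sum_incl. intros a Ha. apply Ge_spec in Ha as [i [Hi Ha]].
  apply Ge_spec. exists i. split; auto. lia.
Qed.
Lemma II_big k x : m < k -> II k x -> x = 0.
Proof.
  intros Hk Hx. unfold II, Ge in Hx. replace (m + 1 - k) with O in Hx by lia. simpl in Hx.
  now apply Sum_nil.
Qed.
Lemma II_add k x y : 1 <= k -> II k x -> II k y -> II k (x + y).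
Proof. intros. now apply Sum_add. Qed.
Lemma II_neg k x : 1 <= k -> II k x -> II k (- x).
Proof. intros. apply Sum_neg; auto. intros; now apply Ge_neg. Qed.
Lemma II_0 k : II k 0.
Proof. constructor. Qed.

Lemma op_II f k j a b : isop f -> 1 <= k -> 1 <= j -> In a (Ge k) -> In b (Ge j) ->
  II (S (max k j)) (f a b).
Proof.
  intros Hf Hk Hj Ha Hb. apply Ge_spec in Ha as [i [Hi Ha]]. apply Ge_spec in Hb as [i' [Hi' Hb]].
  destruct (Ex_op f i i' a b Hf ltac:(lia) ltac:(lia) Ha Hb) as [H1 _].
  destruct (le_lt_dec (S (max i i')) m) as [Hle|Hlt].
  - apply Sum_one. apply Ge_spec. exists (S (max i i')). split; auto. lia.
  - apply Ex_zeta in H1; [|lia]. replace (m + 1 - S (max i i')) with O in H1 by lia.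
    simpl in H1. rewrite H1. constructor.
Qed.

Lemma II_norm k t u : 1 <= k -> II k t -> II 1 u -> II k (- u + t + u).
Proof.
  intros Hk Ht Hu. revert t Ht. induction Hu as [|e u He Hu IH]; intros t Ht.
  - now rewrite neg0, badd_0l, badd_0r.
  - replace (- (e + u) + t + (e + u)) with (- u + (- e + t + e) + u) by (now asimpl).
    apply IH. clear IH Hu u.
    induction Ht as [|g t Hg Ht IHt].
    + rewrite badd_0r, badd_Nl. constructor.
    + replace (- e + (g + t) + e) with ((g + opC g e) + (- e + t + e)) by (unfold opC; now asimpl).
      apply II_add; auto. apply II_add; auto. now apply Sum_one.
      apply (II_mono k (S (max k 1))). lia. apply op_II; auto. right; right; auto.
Qed.

Definition QP k x := forall j, 1 <= j -> forall v, II j v ->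
  II (S (max j k)) (opT x v) /\ II (S (max j k)) (opT' x v).

Lemma QP_gen k x : 1 <= k ->
  (forall j, 1 <= j -> forall g, In g (Ge j) -> II (S (max j k)) (opT x g) /\ II (S (max j k)) (opT' x g)) ->
  QP k x.
Proof.
  intros Hk H j Hj v Hv. induction Hv as [|g v Hg Hv IH].
  - unfold opT, opT'. rewrite !lam_0, neg0, badd_0l. split; constructor.
  - destruct IH as [IH1 IH2]. destruct (H j Hj g Hg) as [G1 G2].
    assert (Hv1 : II 1 v) by (apply (II_mono 1 j); auto).
    split.
    + replace (opT x (g + v)) with ((- v + opT x g + v) + opT x v) by (unfold opT; rewrite lam_add; now asimpl).
      apply II_add; [lia| |auto]. apply II_norm; auto; lia.
    + replace (opT' x (g + v)) with ((- v + opT' x g + v) + opT' x v) by (unfold opT'; rewrite lam_add; now asimpl).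
      apply II_add; [lia| |auto]. apply II_norm; auto; lia.
Qed.

Lemma QP_single k e : 1 <= k -> In e (Ge k) -> QP k e.
Proof.
  intros Hk He. apply QP_gen; auto. intros j Hj g Hg. rewrite Nat.max_comm.
  split; apply op_II; auto; [left|right;left]; auto.
Qed.

Definition PP k := forall x, II k x -> QP k x.

Lemma PP_step k : 1 <= k -> PP (S k) -> PP k.
Proof.
  intros Hk HP x Hx. induction Hx as [|e x' He Hx' IH].
  - intros j Hj v Hv. unfold opT, opT'. rewrite inv0, !lam_one, badd_Nl. split; constructor.
  - pose proof (QP_single k e Hk He) as Qe.
    set (d := opT' e x').
    assert (Hd : II (S k) d).
    { destruct (Qe k Hk x' Hx') as [_ H]. now rewrite Nat.max_id in H. }
    set (d' := lam (binv x') d).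
    assert (Hd' : II (S k) d').
    { unfold d'. rewrite opT'_eq. apply II_add; [lia|auto|].
      destruct (IH (S k) ltac:(lia) d Hd) as [_ H]. apply (II_mono (S k) (S (max (S k) k))); auto. lia. }
    assert (Ex' : e + x' = e * (x' * d')).
    { rewrite (add_as_mul e x'). f_equal. rewrite opT'_eq. fold d. apply add_as_mul. }
    intros j Hj v Hv. set (l := S (max j k)).
    assert (Hl : 1 <= l) by lia.
    assert (mono : forall a, l <= a -> forall y, II a y -> II l y) by (intros; eapply II_mono; eauto).
    split.
    + unfold opT. rewrite Ex', !lam_mul.
      destruct (HP d' Hd' j Hj v Hv) as [t1 _].
      assert (Ht1 : II l (opT d' v)) by ((eapply mono; [|exact t1]; unfold l in *; lia)).
      rewrite (opT_eq d' v). rewrite lam_add, (opT_eq x' v), (opT_eq x' (opT d' v)).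
      destruct (IH j Hj v Hv) as [r1 _]. fold l in r1.
      destruct (IH l Hl _ Ht1) as [r2 _].
      set (r := opT x' v + (opT d' v + opT x' (opT d' v))).
      assert (Hr : II l r).
      { unfold r. apply II_add; auto. apply II_add; auto. (eapply mono; [|exact r2]; unfold l in *; lia). }
      replace (v + opT x' v + (opT d' v + opT x' (opT d' v))) with (v + r) by (unfold r; now asimpl).
      rewrite lam_add, (opT_eq e v), (opT_eq e r).
      destruct (Qe j Hj v Hv) as [s1 _]. destruct (Qe l Hl r Hr) as [s2 _].
      replace (- v + (v + opT e v + (r + opT e r))) with (opT e v + (r + opT e r)) by (now asimpl).
      apply II_add; auto. apply II_add; auto. (eapply mono; [|exact s2]; unfold l in *; lia).
    + unfold opT'. rewrite Ex', !inv_mul, !lam_mul.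
      destruct (HP d' Hd' j Hj v Hv) as [_ t1].
      destruct (Qe j Hj v Hv) as [_ s1]. fold l in s1.
      rewrite (opT'_eq e v). rewrite lam_add, (opT'_eq x' v), (opT'_eq x' (opT' e v)).
      destruct (IH j Hj v Hv) as [_ r1]. fold l in r1.
      destruct (IH l Hl _ s1) as [_ r2].
      set (r := opT' x' v + (opT' e v + opT' x' (opT' e v))).
      assert (Hr : II l r).
      { unfold r. apply II_add; auto. apply II_add; auto. (eapply mono; [|exact r2]; unfold l in *; lia). }
      replace (v + opT' x' v + (opT' e v + opT' x' (opT' e v))) with (v + r) by (unfold r; now asimpl).
      rewrite lam_add, (opT'_eq d' v), (opT'_eq d' r).
      destruct (HP d' Hd' l Hl r Hr) as [_ t2].
      assert (Ht1 : II l (opT' d' v)) by ((eapply mono; [|exact t1]; unfold l in *; lia)).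
      replace (- v + (v + opT' d' v + (r + opT' d' r))) with (opT' d' v + (r + opT' d' r)) by (now asimpl).
      apply II_add; auto. apply II_add; auto. (eapply mono; [|exact t2]; unfold l in *; lia).
Qed.

Lemma PP_big k : m < k -> PP k.
Proof.
  intros Hk x Hx. apply II_big in Hx; auto. subst x.
  intros j Hj v Hv. unfold opT, opT'. rewrite inv0, !lam_one, badd_Nl. split; constructor.
Qed.

Lemma PP_all k : 1 <= k -> PP k.
Proof.
  intros Hk. assert (H : forall n k, 1 <= k -> m < k + n -> PP k).
  { induction n as [|n IHn]; intros k' Hk' Hlt.
    - apply PP_big. lia.
    - destruct (le_lt_dec k' m) as [Hle|Hlt'].
      + apply PP_step; auto. apply IHn; lia.
      + apply PP_big; auto. }
  apply (H (S m) k Hk). lia.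
Qed.

Hypothesis Hgen : forall T : bset B, subbrace B T -> (forall s, In s gens -> T s) -> forall x, T x.



Lemma II_mulsub k : 1 <= k -> mul_subgroup B (II k).
Proof.
  intros Hk. split; [|split].
  - rewrite one_zero. constructor.
  - intros a b Ha Hb. rewrite mul_lam, opT_eq. apply II_add; auto. apply II_add; auto.
    destruct (PP_all k Hk a Ha k Hk b Hb) as [H _]. eapply II_mono; [|exact H]. lia.
  - intros a Ha. rewrite binv_lam, opT'_eq. apply II_add; auto. now apply II_neg.
    destruct (PP_all k Hk a Ha k Hk (- a) (II_neg k a Hk Ha)) as [_ H]. eapply II_mono; [|exact H]. lia.
Qed.

Lemma II1_all x : II 1 x.
Proof.
  apply Hgen.
  - split. apply II_sub; lia. apply II_mulsub; lia.
  - intros s Hs. destruct (le_lt_dec 1 m) as [H1|H1].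
    + apply Sum_one. apply Ge_spec. exists 1. split; [lia|]. rewrite Ex_1. apply in_app_iff. now left.
    + pose proof (Hm s) as Hz. replace m with O in Hz by lia. simpl in Hz. rewrite Hz. constructor.
Qed.

Lemma II_lam k b x : 1 <= k -> II k x -> II k (lam b x).
Proof.
  intros Hk Hx. rewrite opT_eq. apply II_add; auto.
  destruct (PP_all 1 ltac:(lia) b (II1_all b) k Hk x Hx) as [H _].
  eapply II_mono; [|exact H]. lia.
Qed.

Lemma II_ideal k : 1 <= k -> ideal B (II k).
Proof.
  intros Hk. split; [split; [apply II_sub; auto|apply II_mulsub; auto]|]. split; [|split].
  - intros a x Hx. rewrite <- (negK a) at 1. apply II_norm; auto. apply II1_all.
  - intros b x Hx.
    replace (b * x * binv b) with ((b + lam b x + - b) + lam b (opT x (binv b))).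
    + apply II_add; auto.
      * rewrite <- (negK b) at 1. apply II_norm; auto. now apply II_lam. apply II1_all.
      * apply II_lam; auto. destruct (PP_all k Hk x Hx 1 ltac:(lia) (binv b) (II1_all _)) as [H _].
        eapply II_mono; [|exact H]. lia.
    + rewrite (mul_lam (b * x) (binv b)), lam_mul, (mul_lam b x).
      rewrite (opT_eq x (binv b)) at 1. rewrite lam_add, lam_binv. now asimpl.
  - intros b x Hx. now apply II_lam.
Qed.

Lemma opC_II k x y : 1 <= k -> II k x -> II (S k) (opC x y).
Proof.
  intros Hk Hx. assert (Hy : II 1 y) by apply II1_all.
  induction Hx as [|e x' He Hx' IH].
  - unfold opC. rewrite badd_0r, badd_0l, badd_Nl. constructor.
  - replace (opC (e + x') y) with ((- x' + opC e y + x') + opC x' y) by (unfold opC; now asimpl).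
    apply II_add; [lia| |auto]. apply II_norm; [lia| |apply II1_all].
    clear IH. induction Hy as [|g y' Hg Hy' IHy].
    + unfold opC. rewrite badd_0r, badd_0l, badd_Nl. constructor.
    + replace (opC e (g + y')) with (opC e y' + (- y' + opC e g + y')) by (unfold opC; now asimpl).
      apply II_add; [lia|auto|]. apply II_norm; [lia| |apply II1_all].
      replace (S k) with (S (max k 1)) by lia. apply op_II; auto. right; right; auto.
Qed.

Lemma II_central k x : 1 <= k -> II k x -> ZP (II (S k)) x.
Proof.
  intros Hk Hx. split; [|split]; intros y.
  - destruct (PP_all k Hk x Hx 1 ltac:(lia) y (II1_all y)) as [H _].
    replace (S k) with (S (max 1 k)) by lia. exact H.
  - now apply opC_II.
  - destruct (PP_all 1 ltac:(lia) y (II1_all y) k Hk x Hx) as [H _].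
    replace (S k) with (S (max k 1)) by lia. exact H.
Qed.

Lemma II_m1 x : II (S m) x <-> x = 0.
Proof. split. apply II_big; lia. intros ->. constructor. Qed.
Lemma Ge_fin k x : 1 <= k -> II k x -> Sum (Ge k) x.
Proof. auto. Qed.
End Words.

Section ZmulLemmas.
Context {B : brace}.
Local Notation "a + b" := (@badd B a b).
Local Notation "- a" := (@bneg B a).
Local Notation "0" := (@bzero B).
Local Notation nmul := (nmul B).
Local Notation zmul := (zmul B).

Lemma nmul_add a b g : nmul (a + b)%nat g = nmul a g + nmul b g.
Proof. induction a as [|a IH]; simpl. now rewrite badd_0l. now rewrite IH, add_assoc'. Qed.
Lemma nmul_comm n g : g + nmul n g = nmul n g + g.
Proof.
  induction n as [|n IH]; simpl. now rewrite badd_0l, badd_0r.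
  now rewrite add_assoc', <- IH.
Qed.
Lemma zmul_nat n g : zmul (Z.of_nat n) g = nmul n g.
Proof. destruct n; simpl. reflexivity. now rewrite SuccNat2Pos.id_succ. Qed.
Lemma zmul_negnat n g : zmul (- Z.of_nat n)%Z g = - nmul n g.
Proof. destruct n; simpl. now rewrite neg0. now rewrite SuccNat2Pos.id_succ. Qed.
Lemma Z_rep (z : Z) : exists n, z = Z.of_nat n \/ z = (- Z.of_nat n)%Z.
Proof. exists (Z.abs_nat z). lia. Qed.
Lemma zmul_succ z g : zmul (z + 1)%Z g = zmul z g + g.
Proof.
  destruct (Z_rep z) as [n [-> | ->]].
  - replace (Z.of_nat n + 1)%Z with (Z.of_nat (S n)) by lia. rewrite !zmul_nat. simpl. apply nmul_comm.
  - destruct n as [|n].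
    + simpl. rewrite badd_0l, badd_0r. reflexivity.
    + replace (- Z.of_nat (S n) + 1)%Z with (- Z.of_nat n)%Z by lia. rewrite !zmul_negnat. simpl.
      now asimpl.
Qed.
Lemma zmul_pred z g : zmul (z - 1)%Z g = zmul z g + - g.
Proof.
  destruct (Z_rep z) as [n [-> | ->]].
  - destruct n as [|n].
    + simpl. now rewrite badd_0r, badd_0l.
    + replace (Z.of_nat (S n) - 1)%Z with (Z.of_nat n) by lia. rewrite !zmul_nat. simpl.
      rewrite nmul_comm. now asimpl.
  - replace (- Z.of_nat n - 1)%Z with (- Z.of_nat (S n))%Z by lia. rewrite !zmul_negnat. simpl.
    now asimpl.
Qed.
Lemma zmul_0 g : zmul 0%Z g = 0. Proof. reflexivity. Qed.
Lemma zmul_1 g : zmul 1%Z g = g. Proof. simpl. apply badd_0r. Qed.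
Lemma zmul_add a b g : zmul (a + b)%Z g = zmul a g + zmul b g.
Proof.
  induction b as [|b IH|b IH] using Z.peano_ind.
  - now rewrite Z.add_0_r, zmul_0, badd_0r.
  - rewrite <- Z.add_1_r, Z.add_assoc, !zmul_succ, IH. now rewrite add_assoc'.
  - rewrite <- Z.sub_1_r, Z.add_sub_assoc, !zmul_pred, IH. now rewrite add_assoc'.
Qed.
Lemma zmul_opp z g : zmul (- z)%Z g = - zmul z g.
Proof.
  apply neg_unique. rewrite <- zmul_add. now rewrite Z.add_opp_diag_r.
Qed.
Lemma zmul_mul a b g : zmul (a * b)%Z g = zmul a (zmul b g).
Proof.
  induction a as [|a IH|a IH] using Z.peano_ind.
  - reflexivity.
  - rewrite <- Z.add_1_r. replace ((a + 1) * b)%Z with (a * b + b)%Z by ring.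
    rewrite zmul_add, zmul_succ, IH. reflexivity.
  - rewrite <- Z.sub_1_r. replace ((a - 1) * b)%Z with (a * b + - b)%Z by ring.
    rewrite zmul_add, zmul_pred, zmul_opp, IH. reflexivity.
Qed.
Lemma zmul_in (J : bset B) z g : add_subgroup B J -> J g -> J (zmul z g).
Proof.
  intros HJ Hg. induction z as [|z IH|z IH] using Z.peano_ind.
  - apply HJ.
  - rewrite <- Z.add_1_r, zmul_succ. apply HJ; auto.
  - rewrite <- Z.sub_1_r, zmul_pred. apply HJ; auto. apply HJ; auto.
Qed.

Lemma order_dichot (J : bset B) g : add_subgroup B J ->
  (forall z, J (zmul z g) -> z = 0%Z) \/
  exists n, 1 <= n /\ forall z, J (zmul z g) <-> (Z.of_nat n | z)%Z.
Proof.
  intros HJ. destruct (classic (exists z, z <> 0%Z /\ J (zmul z g))) as [[z [Hz0 Hz]]|Hn].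
  - right. set (P := fun n => 1 <= n /\ J (zmul (Z.of_nat n) g)).
    assert (HP : exists n, P n).
    { exists (Z.abs_nat z). split; [lia|]. destruct (Z.le_gt_cases 0 z).
      - now rewrite Zabs2Nat.id_abs, Z.abs_eq.
      - rewrite Zabs2Nat.id_abs, Z.abs_neq by lia. rewrite zmul_opp. apply HJ; auto. }
    destruct (Wf_nat.dec_inh_nat_subset_has_unique_least_element P (fun n => classic (P n)) HP)
      as [n [[[Hn1 Hn] Hmin] _]].
    exists n. split; auto. intros w. split.
    + intros Hw. apply Z.mod_divide; [lia|].
      set (r := (w mod Z.of_nat n)%Z).
      assert (Hr : (0 <= r < Z.of_nat n)%Z) by (apply Z.mod_pos_bound; lia).
      assert (Er : r = (w + - (w / Z.of_nat n) * Z.of_nat n)%Z).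
      { unfold r. rewrite Z.mod_eq by lia. lia. }
      assert (HJr : J (zmul r g)).
      { rewrite Er, zmul_add, zmul_mul. apply HJ; auto. apply zmul_in; auto. }
      destruct (Z.eq_dec r 0) as [E|E]; auto.
      exfalso. assert (Hle : n <= Z.to_nat r).
      { apply Hmin. split; [lia|]. now rewrite Z2Nat.id by lia. }
      lia.
    + intros [q ->]. rewrite zmul_mul. apply zmul_in; auto.
  - left. intros z Hz. apply NNPP. intros Hz0. apply Hn. now exists z.
Qed.

End ZmulLemmas.

Lemma prime_div_exists (n : Z) : (1 < n)%Z -> exists p, prime p /\ (p | n)%Z.
Proof.
  assert (H : forall N n, Z.to_nat n < N -> (1 < n)%Z -> exists p, prime p /\ (p | n)%Z).
  { induction N as [|N IH]; intros k Hk H1; [lia|].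
    destruct (prime_dec k) as [Hp|Hp].
    - exists k. split; auto. apply Z.divide_refl.
    - destruct (not_prime_divide k H1 Hp) as [d [Hd Hdk]].
      destruct (IH d ltac:(lia) ltac:(lia)) as [p [Hp' Hpd]].
      exists p. split; auto. eapply Z.divide_trans; eauto. }
  intros Hn. apply (H (S (Z.to_nat n))); auto.
Qed.

Section Chains.
Context {B : brace}.
Local Notation "a + b" := (@badd B a b).
Local Notation "- a" := (@bneg B a).
Local Notation "0" := (@bzero B).
Local Notation zmul := (zmul B).

Definition step (J I : bset B) : Prop :=
  (quot_inf_cyclic B J I /\ quot_in_soc B J I) \/ quot_prime_order B J I.

Definition Chain (P Q : bset B) : Prop :=
  exists n (I : nat -> bset B), I O = P /\ I n = Q /\
    (forall i, i <= n -> ideal B (I i)) /\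
    (forall i, i < n -> forall x, I i x -> I (S i) x) /\
    (forall i, i < n -> step (I (S i)) (I i)).

Lemma Chain_refl P : ideal B P -> Chain P P.
Proof.
  intros HP. exists O, (fun _ => P). split; auto. split; auto. split; [intros; auto|].
  split; intros; lia.
Qed.
Lemma Chain_one P Q : ideal B P -> ideal B Q -> (forall x, P x -> Q x) -> step Q P -> Chain P Q.
Proof.
  intros HP HQ HPQ Hs. exists 1, (fun i => match i with O => P | _ => Q end).
  split; auto. split; auto. split; [intros [|i] _; auto|].
  split; intros i Hi; replace i with O by lia; auto.
Qed.
Lemma Chain_trans P Q R : Chain P Q -> Chain Q R -> Chain P R.
Proof.
  intros [n1 [I1 [A1 [B1 [C1 [D1 E1]]]]]] [n2 [I2 [A2 [B2 [C2 [D2 E2]]]]]].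
  exists (n1 + n2)%nat, (fun i => if i <=? n1 then I1 i else I2 (i - n1)).
  split; [simpl; auto|]. split.
  { destruct (Nat.leb_spec (n1 + n2)%nat n1).
    - replace n2 with O in * by lia. rewrite Nat.add_0_r. congruence.
    - now replace (n1 + n2 - n1) with n2 by lia. }
  split; [|split].
  - intros i Hi. destruct (Nat.leb_spec i n1). apply C1; auto. apply C2; lia.
  - intros i Hi x Hx. destruct (Nat.leb_spec i n1); destruct (Nat.leb_spec (S i) n1).
    + apply D1; auto; lia.
    + assert (i = n1) by lia. subst i. replace (S n1 - n1) with 1 by lia.
      apply (D2 O); [lia|]. rewrite A2, <- B1. auto.
    + lia.
    + replace (S i - n1) with (S (i - n1)) by lia. apply D2; auto; lia.
  - intros i Hi. destruct (Nat.leb_spec i n1); destruct (Nat.leb_spec (S i) n1).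
    + apply E1; lia.
    + assert (i = n1) by lia. subst i. replace (S n1 - n1) with 1 by lia.
      rewrite B1, <- A2. apply (E2 O). lia.
    + lia.
    + replace (S i - n1) with (S (i - n1)) by lia. apply E2; lia.
Qed.

Lemma bset_ext (P Q : bset B) : (forall x, P x <-> Q x) -> P = Q.
Proof. intros H. apply functional_extensionality. intros x. apply propositional_extensionality. apply H. Qed.

Variables I0 I1 : bset B.
Hypothesis HI0 : ideal B I0.
Hypothesis HI1 : add_subgroup B I1.
Hypothesis H01 : forall x, I0 x -> I1 x.
Hypothesis HZ : forall x, I1 x -> ZP I0 x.

Definition Mid (T : bset B) := add_subgroup B T /\ (forall x, I0 x -> T x) /\ (forall x, T x -> I1 x).

Lemma Mid_ideal T : Mid T -> ideal B T.
Proof. intros [H1 [H2 H3]]. apply (between_ideal I0); auto. Qed.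

Definition Ext (J : bset B) (g : B) : bset B := fun a => exists z, J (- zmul z g + a).

Lemma Ext_mid J g : Mid J -> I1 g -> Mid (Ext J g).
Proof.
  intros HJ Hg. pose proof (Mid_ideal J HJ) as HJi. destruct HJ as [HJs [HJ0 HJ1]].
  split; [split; [|split]|split].
  - exists 0%Z. rewrite zmul_0, neg0, badd_0l. apply HJs.
  - intros a b [z Ha] [z' Hb]. exists (z + z')%Z. rewrite zmul_add.
    replace (- (zmul z g + zmul z' g) + (a + b))
      with ((- zmul z' g + (- zmul z g + a) + - - zmul z' g) + (- zmul z' g + b)) by (now asimpl).
    apply HJs; auto. apply (ideal_nadd J HJi); auto.
  - intros a [z Ha]. exists (- z)%Z. rewrite zmul_opp.
    replace (- - zmul z g + - a) with (zmul z g + - (- zmul z g + a) + - zmul z g) by (now asimpl).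
    apply (ideal_nadd J HJi). apply HJs; auto.
  - intros x Hx. exists 0%Z. rewrite zmul_0, neg0, badd_0l. auto.
  - intros x [z Hx]. replace x with (zmul z g + (- zmul z g + x)) by (now asimpl).
    apply HI1. apply zmul_in; auto. auto.
Qed.

Lemma Ext_incl J g : Mid J -> forall x, J x -> Ext J g x.
Proof. intros HJ x Hx. exists 0%Z. rewrite zmul_0, neg0, badd_0l. auto. Qed.


Lemma Mid_soc J K : Mid J -> Mid K -> quot_in_soc B K J.
Proof.
  intros [_ [HJ0 _]] [_ [_ HK1]] x Hx. destruct (HZ x (HK1 x Hx)) as [A [C _]].
  split; intros y; apply HJ0. apply A. apply C.
Qed.

Lemma Ext_eq_self J g : Mid J -> J g -> Ext J g = J.
Proof.
  intros HJ Hg. pose proof (proj1 HJ) as HJs. apply bset_ext. intros x. split.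
  - intros [z Hz]. replace x with (zmul z g + (- zmul z g + x)) by (now asimpl).
    apply HJs; [apply zmul_in; auto | auto].
  - now apply Ext_incl.
Qed.

Lemma chain_inf J g : Mid J -> I1 g -> (forall z, J (zmul z g) -> z = 0%Z) -> Chain J (Ext J g).
Proof.
  intros HJ Hg Hord. pose proof (Ext_mid J g HJ Hg) as HE.
  apply Chain_one; auto using Mid_ideal, Ext_incl.
  left. split; [|apply Mid_soc; auto].
  exists g. split; [|split].
  - exists 1%Z. rewrite zmul_1, badd_Nl. apply (proj1 (proj1 HJ)).
  - intros x [z Hz]. exists z. exact Hz.
  - exact Hord.
Qed.

Lemma nth_map_seq (f : nat -> B) n i : i < n -> nth i (map f (seq 0 n)) bzero = f i.
Proof.
  intros Hi. rewrite (nth_indep _ bzero (f O)) by (rewrite length_map, length_seq; lia).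
  rewrite map_nth, seq_nth by lia. reflexivity.
Qed.

Lemma chain_fin n : forall J g, Mid J -> I1 g -> 1 <= n ->
  (forall z, J (zmul z g) <-> (Z.of_nat n | z)%Z) -> Chain J (Ext J g).
Proof.
  induction n as [n IH] using lt_wf_ind. intros J g HJ Hg Hn Hord.
  destruct (Nat.eq_dec n 1) as [->|Hn1].
  - rewrite Ext_eq_self; auto. apply Chain_refl, Mid_ideal; auto.
    rewrite <- (zmul_1 g). apply Hord. apply Z.divide_refl.
  - destruct (prime_div_exists (Z.of_nat n) ltac:(lia)) as [p [Hp [q Hq]]].
    pose proof (prime_ge_2 p Hp) as Hp2.
    assert (Hq1 : (1 <= q)%Z) by nia.
    set (g' := zmul p g).
    assert (Hg' : I1 g') by (apply zmul_in; auto).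
    assert (Hord' : forall z, J (zmul z g') <-> (Z.of_nat (Z.to_nat q) | z)%Z).
    { intros z. unfold g'. rewrite <- zmul_mul, Hord, Hq, Z2Nat.id by lia.
      apply Z.mul_divide_cancel_r. lia. }
    assert (IHc : Chain J (Ext J g')).
    { apply (IH (Z.to_nat q)); auto; nia. }
    pose proof (Ext_mid J g' HJ Hg') as HK.
    pose proof (Ext_mid J g HJ Hg) as HE.
    apply (Chain_trans _ _ _ IHc). apply Chain_one; auto using Mid_ideal.
    { intros x [z Hz]. exists (z * p)%Z. unfold g' in Hz. now rewrite zmul_mul. }
    right. set (pn := Z.to_nat p).
    exists pn, (map (fun i => zmul (Z.of_nat i) g) (seq 0 pn)).
    split; [unfold pn; now rewrite Z2Nat.id by lia|].
    split; [now rewrite length_map, length_seq|].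
    split; [|split].
    + intros a Ha. apply in_map_iff in Ha as [i [<- _]]. exists (Z.of_nat i). rewrite badd_Nl. apply (proj1 (proj1 HJ)).
    + intros j k Hj Hk Hc.
      rewrite !nth_map_seq in Hc by lia. cbv beta in Hc.
      destruct Hc as [z Hz]. unfold g' in Hz.
      rewrite <- zmul_mul, <- !zmul_opp, <- !zmul_add, Hord in Hz.
      assert (Hpd : (p | Z.of_nat j - Z.of_nat k)%Z).
      { rewrite Hq in Hz. destruct Hz as [c Hc].
        exists (c * q + z)%Z. nia. }
      destruct Hpd as [c Hc]. assert (c = 0%Z) by nia. lia.
    + intros x [z Hz]. set (r := (z mod p)%Z).
      assert (Hr : (0 <= r < p)%Z) by (apply Z.mod_pos_bound; lia).
      exists (zmul r g). split.
      * apply in_map_iff. exists (Z.to_nat r). split. now rewrite Z2Nat.id by lia.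
        apply in_seq. unfold pn. lia.
      * exists (z / p)%Z. unfold g'. rewrite <- zmul_mul.
        replace (- zmul (z / p * p) g + (- zmul r g + x)) with (- (zmul r g + zmul (z / p * p) g) + x)
          by (now asimpl).
        rewrite <- zmul_add. replace (r + z / p * p)%Z with z; auto.
        unfold r. rewrite Z.mod_eq by lia. ring.
Qed.

Lemma chain_ext J g : Mid J -> I1 g -> Chain J (Ext J g).
Proof.
  intros HJ Hg. destruct (order_dichot J g (proj1 HJ)) as [H|[n [Hn H]]].
  - now apply chain_inf.
  - now apply (chain_fin n).
Qed.

Lemma chain_list L : forall J, Mid J -> (forall g, In g L -> I1 g) ->
  exists J', Chain J J' /\ Mid J' /\ (forall x, J x -> J' x) /\ (forall g, In g L -> J' g).
Proof.
  induction L as [|g L IH]; intros J HJ HL.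
  - exists J. split; [apply Chain_refl, Mid_ideal; auto|]. split; auto. split; auto. intros g [].
  - assert (Hg : I1 g) by (apply HL; now left).
    pose proof (Ext_mid J g HJ Hg) as HE.
    destruct (IH (Ext J g) HE (fun h Hh => HL h (or_intror Hh))) as [J' [C [HM [Hinc HL']]]].
    exists J'. split; [eapply Chain_trans; [apply chain_ext|]; eauto|].
    split; auto. split.
    + intros x Hx. apply Hinc. now apply Ext_incl.
    + intros h [<-|Hh]; auto. apply Hinc. exists 1%Z. rewrite zmul_1, badd_Nl. apply (proj1 (proj1 HJ)).
Qed.

Lemma chain_layer L : (forall x, I1 x <-> Sum L x) -> Chain I0 I1.
Proof.
  intros HL. assert (HM : Mid I0) by (split; [apply HI0|split; auto]).
  destruct (chain_list L I0 HM) as [J' [C [[HJs [_ HJ1]] [_ HLJ]]]].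
  { intros g Hg. apply HL. now apply Sum_one. }
  replace I1 with J'; auto. apply bset_ext. intros x. split; auto.
  intros Hx. apply HL in Hx. revert Hx. apply Sum_closed; auto.
Qed.

End Chains.

Theorem theorem3p6 (B : brace) :
  fin_gen B -> centrally_nilpotent B -> supersoluble B.
Proof.
  intros [gens Hgen] [m Hm].
  assert (Hlayer : forall k, 1 <= k -> Chain (II gens m (S k)) (II gens m k)).
  { intros k Hk. apply (chain_layer (II gens m (S k)) (II gens m k)) with (L := Ge gens m k).
    - apply II_ideal; auto; lia.
    - apply II_sub; auto.
    - apply II_mono; auto.
    - intros x Hx. apply II_central with (gens := gens) (m := m); auto.
    - intros x. reflexivity. }
  assert (Hall : forall n, n <= m -> Chain (II gens m (S m)) (II gens m (S m - n))).
  { induction n as [|n IH]; intros Hn.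
    - rewrite Nat.sub_0_r. apply Chain_refl. apply II_ideal; auto; lia.
    - eapply Chain_trans. apply IH; lia.
      replace (S m - n) with (S (S m - S n)) by lia. apply Hlayer. lia. }
  specialize (Hall m (le_n m)). replace (S m - m) with 1 in Hall by lia.
  replace (II gens m (S m)) with (fun x : B => x = bzero) in Hall.
  2:{ apply bset_ext. intros x. symmetry. apply II_m1; auto. }
  replace (II gens m 1) with (fun _ : B => True) in Hall.
  2:{ apply bset_ext. intros x. split; auto. intros _. apply II1_all with (m := m); auto. }
  destruct Hall as [n [I [H0 [Hn [Hid [Hinc Hst]]]]]].
  exists n, I. split; [|split; [|split; [|split]]].
  - intros x. now rewrite H0.
  - intros x. now rewrite Hn.
  - exact Hid.
  - exact Hinc.
  - exact Hst.
Qed.
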